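(* Let $x$ be a stable g-matching with $x\ne x^{\max}$. For each rotation $R\in\mathcal R(x)$, the g-matching $x':=x+\chi^R$ is stable and satisfies $x\prec_F x'$.
   Context: Let $G=(V,E)$ be a finite bipartite graph with color classes $W$ and $F$; the edge joining $w\in W$ and $f\in F$ is written $wf$. Let $b\in\mathbb Z_+^E$ be capacities. For $v\in V$, $E_v$ is the set of edges at $v$, $\mathcal B_v=\{z\in\mathbb Z_+^{E_v}: z\le b|_{E_v}\}$, $\mathbf 1^e$ the unit vector of $e$, $|z|=\sum_e|z(e)|$, $\wedge,\vee$ componentwise min/max. Each $v$ has a choice function $C_v:\mathcal B_v\to\mathcal B_v$ with $C_v(z)\le z$ and, for all $z,z'$: (A1) $z\ge z'\ge C_v(z)\Rightarrow C_v(z')=C_v(z)$; (A2) $z\ge z'\Rightarrow C_v(z)\wedge z'\le C_v(z')$; (A3) $z\ge z'\Rightarrow|C_v(z)|\ge|C_v(z')|$. $z$ is acceptable if $C_v(z)=z$; for distinct acceptable $z,z'$, $z'\prec_v z$ iff $C_v(z\vee z')=z$. $x_v$ = restriction of $x$ to $E_v$. A g-matching is $x\in\mathbb Z_+^E$, $x\le b$, each $x_v$ acceptable; $x\prec_F y$ (distinct) iff $x_f\preceq_f y_f$ for all $f\in F$. $e\in E_v$ is interesting for $v$ under acceptable $z$ if some $z'\in\mathcal B_v$ has $z'(e)>z(e)$, $z'(e')=z(e')$ for $e'\neq e$, $C_v(z')(e)>z(e)$; $e=wf$ blocks a g-matching $x$ if it is interesting for $w$ under $x_w$ and for $f$ under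 $x_f$; stable g-matchings (no blocking edges) form a nonempty finite distributive lattice under $\prec_F$ with maximum $x^{\max}$. Rotations: for stable $x$, $U_F^+(x)$ = edges $wf$ interesting for $f$ under $x_f$; $U_F^-(x)$ = edges $wf$ with $x(wf)>0$ not interesting for $f$. Legal $f$-pair: $(a,c)$, $a\in U_F^+(x)\cap E_f$, $c\in E_f\setminus\{a\}$, $C_f(x_f+\mathbf 1^a)=x_f+\mathbf 1^a-\mathbf 1^c$. Legal $w$-pair: $(c,a)$, $c\in U_F^-(x)\cap E_w$, $a\in U_F^+(x)\cap E_w$, $x_w+\mathbf 1^a-\mathbf 1^c$ acceptable; essential if no $d\in (U_F^+(x)\cap E_w)\setminus\{a\}$ is interesting for $w$ under $x_w+\mathbf 1^a-\mathbf 1^c$ (at most one essential pair per $c$). Digraph $\mathcal D$: vertices $w^e,f^e$ for $e=wf\in U_F^+(x)\cup U_F^-(x)$, arcs $(w^a,f^a)$ for $a\in U_F^+(x)$, $(f^c,w^c)$ for $c\in U_F^-(x)$, $(f^a,f^c)$ for legal $f$-pairs $(a,c)$, $(w^c,w^a)$ for essential $w$-pairs $(c,a)$. Repeatedly delete vertices with no entering arc; the remainder is a disjoint union of directed cycles, each giving a cyclic sequence $(a_1,c_1,\dots,a_k,c_k)$ of distinct edges of $G$; this is a rotation $R$ applicable to $x$, with $\chi^R\in\{0,\pm1\}^E$ equal to $1$ on $\{a_i\}$, $-1$ on $\{c_i\}$, $0$ elsewhere; $\mathcal R(x)$ is the set of these rotations. *)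

(* Defs.v *)
From HB Require Import structures.
From mathcomp Require Import all_boot all_order all_algebra.
From mathcomp Require Import boolp.
Set Implicit Arguments. Unset Strict Implicit. Unset Printing Implicit Defensive.

(* Vectors in Z_+^{E_v}
   are represented as vectors in Z_+^E vanishing outside E_v. *)
Record gmarket (W F E : finType) := GMarket {
  wend : E -> W;
  fend : E -> F;
  cap : E -> nat;
  choice : (W + F)%type -> {ffun E -> nat} -> {ffun E -> nat} }.

Section Defs.
Context {W F E : finType} (G : gmarket W F E).
Local Notation V := (W + F)%type.
Local Notation vec := {ffun E -> nat}.
Local Notation C := (choice G).

Definition incident (v : V) (e : E) : bool :=
  match v with inl w => wend G e == w | inr f => fend G e == f end.

Definition simple_graph : Prop := injective (fun e => (wend G e, fend G e)).

Definition inB (v : V) (z : vec) : Prop :=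
  forall e, z e <= (if incident v e then cap G e else 0).

Definition lev (z z' : vec) : Prop := forall e, z e <= z' e.
Definition vmin (z z' : vec) : vec := [ffun e => minn (z e) (z' e)].
Definition vmax (z z' : vec) : vec := [ffun e => maxn (z e) (z' e)].
Definition vsize (z : vec) : nat := \sum_e z e.
Definition unitv (a : E) : vec := [ffun e => nat_of_bool (e == a)].
Definition vadd (z z' : vec) : vec := [ffun e => z e + z' e].

Definition restrict (v : V) (x : vec) : vec :=
  [ffun e => if incident v e then x e else 0].

(* C_v : B_v -> B_v, C_v(z) <= z, and axioms (A1)-(A3) *)
Definition choice_axioms : Prop := forall v : V,
  (forall z, inB v z -> inB v (C v z) /\ lev (C v z) z) /\
  (forall z z', inB v z -> inB v z' ->
     lev z' z -> lev (C v z) z' -> C v z' = C v z) /\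
  (forall z z', inB v z -> inB v z' ->
     lev z' z -> lev (vmin (C v z) z') (C v z')) /\
  (forall z z', inB v z -> inB v z' ->
     lev z' z -> vsize (C v z') <= vsize (C v z)).

Definition acceptable (v : V) (z : vec) : Prop := inB v z /\ C v z = z.

Definition prefv (v : V) (z' z : vec) : Prop :=
  acceptable v z /\ acceptable v z' /\ z <> z' /\ C v (vmax z z') = z.
Definition preceqv (v : V) (z' z : vec) : Prop := z' = z \/ prefv v z' z.

Definition gmatching (x : vec) : Prop :=
  (forall e, x e <= cap G e) /\ (forall v, acceptable v (restrict v x)).

Definition precF (x y : vec) : Prop :=
  x <> y /\ forall f : F, preceqv (inr f) (restrict (inr f) x) (restrict (inr f) y).

Definition interesting (v : V) (e : E) (z : vec) : Prop :=
  incident v e /\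
  exists z' : vec, inB v z' /\ z e < z' e /\
    (forall e', e' != e -> z' e' = z e') /\ z e < C v z' e.

Definition blocks (x : vec) (e : E) : Prop :=
  interesting (inl (wend G e)) e (restrict (inl (wend G e)) x) /\
  interesting (inr (fend G e)) e (restrict (inr (fend G e)) x).

Definition stable (x : vec) : Prop := gmatching x /\ forall e, ~ blocks x e.

Definition is_max_stable (xm : vec) : Prop :=
  stable xm /\ forall y, stable y -> y = xm \/ precF y xm.

Section Rotations.
Variable x : vec.

Definition Uplus (e : E) : Prop :=
  interesting (inr (fend G e)) e (restrict (inr (fend G e)) x).
Definition Uminus (e : E) : Prop := 0 < x e /\ ~ Uplus e.

Definition legal_f (f : F) (a c : E) : Prop :=
  incident (inr f) a /\ Uplus a /\ incident (inr f) c /\ c != a /\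
  forall e, C (inr f) (vadd (restrict (inr f) x) (unitv a)) e + (e == c)
            = restrict (inr f) x e + (e == a).

(* x_w + 1^a - 1^c (exact, since x(c) > 0 and a <> c for the pairs considered) *)
Definition wshift (w : W) (a c : E) : vec :=
  [ffun e => restrict (inl w) x e + (e == a) - (e == c)].

Definition legal_w (w : W) (c a : E) : Prop :=
  incident (inl w) c /\ Uminus c /\ incident (inl w) a /\ Uplus a /\
  acceptable (inl w) (wshift w a c).

Definition essential (w : W) (c a : E) : Prop :=
  legal_w w c a /\
  forall d, incident (inl w) d -> Uplus d -> d != a ->
    ~ interesting (inl w) d (wshift w a c).

(* vertices of D: (true, e) = w^e, (false, e) = f^e, for e in U+ \cup U- *)
Definition inD (p : bool * E) : Prop := Uplus p.2 \/ Uminus p.2.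

Definition arc (p q : bool * E) : Prop :=
  inD p /\ inD q /\
  match p.1, q.1 with
  | true, false => p.2 = q.2 /\ Uplus p.2
  | false, true => p.2 = q.2 /\ Uminus p.2
  | false, false => legal_f (fend G p.2) p.2 q.2
  | true, true => essential (wend G p.2) p.2 q.2
  end.

Fixpoint remk (k : nat) (p : bool * E) : Prop :=
  match k with
  | 0 => inD p
  | k'.+1 => remk k' p /\ exists u, remk k' u /\ arc u p
  end.

Definition remainder (p : bool * E) : Prop := remk #|{: bool * E}| p.

Definition rotation (cyc : seq (bool * E)) : Prop :=
  cyc <> [::] /\ uniq cyc /\
  (forall pq, pq \in zip cyc (rot 1 cyc) -> arc pq.1 pq.2) /\
  (forall p, p \in cyc -> remainder p).

Definition on_cycle (cyc : seq (bool * E)) (e : E) : Prop :=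
  (true, e) \in cyc \/ (false, e) \in cyc.

Definition chi (cyc : seq (bool * E)) (e : E) : int :=
  if `[< on_cycle cyc e /\ Uplus e >] then 1%R
  else if `[< on_cycle cyc e /\ Uminus e >] then (-1)%R
  else 0%R.

End Rotations.
End Defs.

(* Main.v *)
Require Import Defs.
From HB Require Import structures.
From mathcomp Require Import all_boot all_order all_algebra.
From mathcomp Require Import boolp zify.
Set Implicit Arguments. Unset Strict Implicit. Unset Printing Implicit Defensive.

Ltac lia_nb := repeat match goal with H : is_true ?b |- _ =>
  lazymatch b with leq _ _ => fail | _ => clear H end end; lia.

Section Abs.
Variables (E : finType) (u : E -> nat) (C : {ffun E -> nat} -> {ffun E -> nat}).
Local Notation vec := {ffun E -> nat}.
Definition Bx (z : vec) := forall e, z e <= u e.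
Definition axC : Prop :=
  [/\ (forall z, Bx z -> lev (C z) z),
   (forall z z', Bx z -> Bx z' -> lev z' z -> lev (C z) z' -> C z' = C z),
   (forall z z', Bx z -> Bx z' -> lev z' z -> lev (vmin (C z) z') (C z')) &
   (forall z z', Bx z -> Bx z' -> lev z' z -> vsize (C z') <= vsize (C z))].
Hypothesis Hall : axC.
Let HC : forall z, Bx z -> lev (C z) z. Proof. by case: Hall. Qed.
Let HA1 : forall z z', Bx z -> Bx z' -> lev z' z -> lev (C z) z' -> C z' = C z.
Proof. by case: Hall. Qed.
Let HA2 : forall z z', Bx z -> Bx z' -> lev z' z -> lev (vmin (C z) z') (C z').
Proof. by case: Hall. Qed.
Let HA3 : forall z z', Bx z -> Bx z' -> lev z' z -> vsize (C z') <= vsize (C z).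
Proof. by case: Hall. Qed.

Definition inc (z : vec) (e : E) : vec := [ffun g => z g + (g == e)].
Definition sh (x : vec) (p m : E -> nat) : vec := [ffun g => x g + p g - m g].
Definition ind (S : {set E}) (g : E) : nat := g \in S.

Lemma Bx_le z z' : Bx z -> lev z' z -> Bx z'.
Proof. by move=> Hz Hl e; apply: leq_trans (Hz e). Qed.

Lemma a2 z z' e : Bx z -> lev z' z -> minn (C z e) (z' e) <= C z' e.
Proof.
move=> Hz Hl; have Hz' := Bx_le Hz Hl.
by have := HA2 Hz Hz' Hl e; rewrite /vmin ffunE.
Qed.

Lemma le_eq_size (f g : vec) : lev f g -> vsize g <= vsize f -> f = g.
Proof.
move=> Hl Hs; apply/ffunP => e; apply/eqP; rewrite eqn_leq Hl /=.
rewrite leqNgt; apply/negP => Hlt.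
move: Hs; rewrite /vsize (bigD1 e) //= [X in _ <= X](bigD1 e) //=.
have : \sum_(i | i != e) f i <= \sum_(i | i != e) g i by apply: leq_sum => i _; apply: Hl.
lia.
Qed.

Lemma sum_ind (S : {set E}) : \sum_g ind S g = #|S|.
Proof.
rewrite -sum1_card [RHS]big_mkcond /=; apply: eq_bigr => g _.
by rewrite /ind; case: (g \in S).
Qed.

Lemma sum_eq1 (a : E) : \sum_g nat_of_bool (g == a) = 1.
Proof.
rewrite (bigD1 a) //= eqxx big1 // => g /negbTE ->. by [].
Qed.

Lemma vsize_sh (x : vec) (p m : E -> nat) : (forall g, m g <= x g + p g) ->
  vsize (sh x p m) + \sum_g m g = vsize x + \sum_g p g.
Proof.
move=> Hm; rewrite /vsize -!big_split /=; apply: eq_bigr => g _.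
rewrite /sh ffunE; have := Hm g; lia.
Qed.

Lemma vsize_inc z e : vsize (inc z e) = vsize z + 1.
Proof.
rewrite /vsize -(sum_eq1 e) -big_split /=; apply: eq_bigr => g _.
by rewrite /inc ffunE.
Qed.

Lemma nonint_add z Z : Bx Z -> C z = z -> lev z Z ->
  (forall e, z e < Z e -> C (inc z e) e <= z e) -> C Z = z.
Proof.
move=> BZ Cz lzZ Hn.
have Bz := Bx_le BZ lzZ.
have H : lev (C Z) z.
  move=> e; case: (ltnP (z e) (Z e)) => He.
  - have Hl : lev (inc z e) Z.
      by move=> g; rewrite /inc ffunE; case: eqP => [->|_]; rewrite ?addn1 ?addn0.
    have := a2 e BZ Hl; have := Hn e He; rewrite /inc ffunE eqxx; lia.
  - by apply: leq_trans (HC BZ e) He.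
by rewrite -(HA1 BZ Bz lzZ H) Cz.
Qed.


Lemma shE x p m g : sh x p m g = x g + p g - m g.
Proof. by rewrite /sh ffunE. Qed.
Lemma incE z e g : inc z e g = z g + (g == e).
Proof. by rewrite /inc ffunE. Qed.

Definition addS (x : vec) (S : {set E}) := sh x (ind S) (fun=> 0).

Lemma F_main (x : vec) (SA SC : {set E}) : Bx (addS x SA) -> C x = x ->
  (forall c, (c \in SC) ==> (c \notin SA)) ->
  (forall c, c \in SC -> 0 < x c) -> #|SA| <= #|SC| ->
  (forall c, c \in SC -> exists2 a, a \in SA & C (inc x a) c < x c) ->
  C (addS x SA) = sh x (ind SA) (ind SC).
Proof.
move=> BZ Cx Hdis Hpos Hcard Hpair.
have lxZ : lev x (addS x SA) by move=> g; rewrite /addS shE; lia.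
have Bx0 := Bx_le BZ lxZ.
apply: le_eq_size.
- move=> e; rewrite shE /ind; case: (boolP (e \in SC)) => He.
  + have [a Ha Hlt] := Hpair e He.
    have Hl : lev (inc x a) (addS x SA).
      move=> g; rewrite incE /addS shE /ind.
      have : (g == a) ==> (g \in SA) by apply/implyP => /eqP ->.
      lia.
    have := a2 e BZ Hl; rewrite incE.
    have := Hdis e; rewrite He /=.
    have : (e == a) ==> (e \in SA) by apply/implyP => /eqP ->.
    lia.
  + have := HC BZ e; rewrite /addS shE /ind; lia.
- have Hs := vsize_sh (x := x) (p := ind SA) (m := ind SC).
  rewrite !sum_ind in Hs; have {}Hs := Hs _.
  have : vsize (sh x (ind SA) (ind SC)) + #|SC| = vsize x + #|SA|.
    apply: Hs => g; have := Hpos g; have := Hdis g; rewrite /ind.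
    by case: (g \in SC) => //= H1 H2; have := H2 erefl; lia.
  have := HA3 BZ Bx0 lxZ; rewrite Cx; lia.
Qed.

Lemma F_int (x : vec) (SA SC : {set E}) e : Bx (addS x SA) -> C x = x ->
  (forall c, c \in SC -> 0 < x c) ->
  C (addS x SA) = sh x (ind SA) (ind SC) -> e \notin SA ->
  sh x (ind SA) (ind SC) e < u e ->
  sh x (ind SA) (ind SC) e < C (inc (sh x (ind SA) (ind SC)) e) e ->
  [/\ e \notin SC, x e < u e & x e < C (inc x e) e].
Proof.
set Z := addS x SA; set X := sh x (ind SA) (ind SC).
move=> BZ Cx Hpos CZ HeA HXu HXi.
have lXZ : lev X Z by move=> g; rewrite /X /Z /addS !shE; lia.
case: (boolP (e \in SC)) => HeC.
  have Hl : lev (inc X e) Z.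
    move=> g; rewrite incE /X /Z /addS !shE /ind.
    case: (g =P e) => [->|_]; rewrite ?HeA ?HeC /=; have := Hpos e HeC; lia.
  have Hl2 : lev (C Z) (inc X e) by rewrite CZ => g; rewrite incE; lia.
  have Hc := HA1 BZ (Bx_le BZ Hl) Hl Hl2.
  by move: HXi; rewrite Hc CZ; lia.
have XeE : X e = x e by rewrite /X shE /ind (negbTE HeA) (negbTE HeC) addn0 subn0.
rewrite -XeE; split => //.
rewrite ltnNge; apply/negP => Hni.
set Zp := inc Z e.
have BZp : Bx Zp.
  move=> g; rewrite /Zp incE; case: (g =P e) => [->|_].
  - move: HXu; rewrite /Z /addS shE /ind (negbTE HeA) XeE; lia.
  - by rewrite addn0; apply: BZ.
have lZZp : lev Z Zp by move=> g; rewrite /Zp incE; lia.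
have HCZ : lev (C Zp) X.
  move=> g; case: (g =P e) => [->|/eqP Hg].
  - have Hl : lev (inc x e) Zp.
      move=> g'; rewrite !incE /Zp /Z /addS shE; lia.
    have := a2 e BZp Hl; rewrite incE eqxx XeE; lia.
  - have := a2 g BZp lZZp; rewrite CZ.
    have := HC BZp g; rewrite /Zp incE (negbTE Hg) addn0 /Z /addS /X !shE; lia.
have HCZ2 : lev (C Zp) Z by move=> g; apply: leq_trans (HCZ g) (lXZ g).
have E1 := HA1 BZp BZ lZZp HCZ2.
have lXi : lev (inc X e) Zp by move=> g; rewrite !incE; have := lXZ g; lia.
have HCZ3 : lev (C Zp) (inc X e) by move=> g; rewrite incE; have := HCZ g; lia.
have E2 := HA1 BZp (Bx_le BZp lXi) lXi HCZ3.
by move: HXi; rewrite E2 -E1 CZ; lia.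
Qed.


Definition eqv (a : E) (g : E) : nat := g == a.

Lemma W1 (x : vec) a c : Bx x -> C x = x -> a != c -> 0 < x c ->
  C (sh x (eqv a) (eqv c)) = sh x (eqv a) (eqv c) ->
  Bx (inc (sh x (eqv a) (eqv c)) a) ->
  C (inc x a) a <= x a ->
  C (inc (sh x (eqv a) (eqv c)) a) a <= sh x (eqv a) (eqv c) a.
Proof.
set y := sh x (eqv a) (eqv c).
move=> Bx0 Cx Hac Hxc Cy By1 Hni.
set Z := sh x (fun g => 2 * (g == a)) (fun=> 0).
have Hca : (c == a) = false by rewrite eq_sym; apply/negbTE.
have BZ : Bx Z.
  move=> g; rewrite /Z shE; case: (g =P a) => [->|_].
  - have := By1 a; rewrite incE /y shE /eqv eqxx (negbTE Hac); lia.
  - by rewrite muln0 addn0 subn0.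
have lxZ : lev x Z by move=> g; rewrite /Z shE; lia.
have CZ : C Z = x.
  apply: nonint_add => // e; rewrite /Z shE; case: (e =P a) => [->|_] //; lia.
have lyZ : lev (inc y a) Z.
  move=> g; rewrite incE /y /Z !shE /eqv; case: (g =P a) => [->|_]; rewrite ?Hca; lia.
rewrite leqNgt; apply/negP => Hgt.
have Heq : C (inc y a) = inc y a.
  apply/ffunP => g; apply/eqP; rewrite eqn_leq (HC By1 g) /=.
  case: (g =P a) => [->|/eqP Hg]; first by move: Hgt; rewrite incE eqxx; lia.
  have := a2 g BZ lyZ; rewrite CZ incE /y shE /eqv (negbTE Hg); lia.
have := HA3 BZ By1 lyZ; rewrite Heq CZ vsize_inc.
have := vsize_sh (x := x) (p := eqv a) (m := eqv c); rewrite /eqv !sum_eq1.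
move=> H; have {}H := H _; rewrite -/y in H.
have : vsize y + 1 = vsize x + 1.
  apply: H => g; rewrite /eqv; case: (g =P c) => [->|_]; rewrite ?Hca; lia.
lia.
Qed.

Definition ess_hyp (x : vec) (P SC : {set E}) (a : E) :=
  exists2 c, c \in SC &
    (C (sh x (eqv a) (eqv c)) = sh x (eqv a) (eqv c) /\
     forall d, d \in P -> d != a -> sh x (eqv a) (eqv c) d < u d ->
       C (inc (sh x (eqv a) (eqv c)) d) d <= sh x (eqv a) (eqv c) d).

Lemma W_acc (x : vec) (SA SC P : {set E}) : Bx (addS x SA) -> C x = x ->
  (forall c, (c \in SC) ==> (c \notin SA)) -> (forall c, c \in SC -> 0 < x c) ->
  #|SC| <= #|SA| -> SA \subset P ->
  (forall a, a \in SA -> ess_hyp x P SC a) ->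
  C (sh x (ind SA) (ind SC)) = sh x (ind SA) (ind SC).
Proof.
move=> BZ Cx Hdis Hpos Hcard HSP Hess.
set T := sh x (ind SA) (ind SC).
have lTZ : lev T (addS x SA) by move=> g; rewrite /T /addS !shE; lia_nb.
have BT := Bx_le BZ lTZ.
case: (set_0Vmem SA) => [SA0 | [a0 Ha0]].
  have SC0 : SC = set0 by apply/eqP; rewrite -cards_eq0 -leqn0; rewrite SA0 cards0 in Hcard.
  have -> : T = x by apply/ffunP => g; rewrite /T shE /ind SA0 SC0 !in_set0 addn0 subn0.
  exact: Cx.
apply/ffunP => e; apply/eqP; rewrite eqn_leq (HC BT e) /=.
pose a := if e \in SA then e else a0.
have Ha : a \in SA by rewrite /a; case: ifP.
have HeA : (e \in SA) ==> (e == a) by rewrite /a; case: ifP => H; rewrite ?eqxx ?implybT ?H.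
have [c Hc [Cy Hes]] := Hess a Ha.
set y := sh x (eqv a) (eqv c) in Cy Hes *.
set Y := sh x (ind SA) (eqv c).
have lYZ : lev Y (addS x SA) by move=> g; rewrite /Y /addS !shE; lia_nb.
have BY := Bx_le BZ lYZ.
have HcA := Hdis c; rewrite Hc /= in HcA.
have Hxc := Hpos c Hc.
have Hfacts : forall g, [&& (g == a) ==> (g \in SA), (g == c) ==> (g \in SC),
     (g == c) ==> (g \notin SA), (g \in SC) ==> (g \notin SA) & (g == c) ==> (0 < x g)].
  move=> g; rewrite (Hdis g) /=.
  have Hac : a != c by apply/eqP => Eac; move: HcA; rewrite -Eac Ha.
  case: (g =P a) => [Ea|_]; case: (g =P c) => [Ec|_] //=.
  - by move: Hac; rewrite -Ea -Ec eqxx.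
  - by rewrite Ea Ha.
  - by rewrite Ec Hc HcA Hxc.
have lyY : lev y Y.
  move=> g; rewrite /y /Y !shE /eqv /ind; have := Hfacts g; lia_nb.
have CY : C Y = y.
  apply: nonint_add => // g Hg.
  have [HgA Hga] : g \in SA /\ g != a.
    move: Hg; rewrite /y /Y !shE /eqv /ind; have := Hfacts g.
    case: (g \in SA); case: (g =P a) => //= _; lia_nb.
  apply: Hes => //; first by apply: (subsetP HSP).
  apply: leq_trans Hg _; exact: BY.
have lTY : lev T Y by move=> g; rewrite /T /Y !shE /eqv /ind; have := Hfacts g; lia_nb.
have := a2 e BY lTY; rewrite CY /y /T !shE /eqv /ind; have := Hfacts e; move: HeA; lia_nb.
Qed.


Lemma W_nonint (x : vec) (SA SC P : {set E}) d : Bx (addS x SA) -> C x = x ->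
  (forall c, (c \in SC) ==> (c \notin SA)) -> (forall c, c \in SC -> 0 < x c) ->
  #|SC| <= #|SA| -> SA \subset P -> (forall c, c \in SC -> c \notin P) ->
  (forall d, d \in P -> x d < u d -> C (inc x d) d <= x d) ->
  (forall a, a \in SA -> ess_hyp x P SC a) ->
  d \in P -> sh x (ind SA) (ind SC) d < u d ->
  C (inc (sh x (ind SA) (ind SC)) d) d <= sh x (ind SA) (ind SC) d.
Proof.
move=> BZ0 Cx Hdis Hpos Hcard HSP HCP Hnx Hess Hd HTd.
set T := sh x (ind SA) (ind SC).
have lxZ0 : lev x (addS x SA) by move=> g; rewrite /addS shE; lia_nb.
have Bx0 := Bx_le BZ0 lxZ0.
have HdC : d \notin SC by apply/negP => /HCP; rewrite Hd.
have TdE : T d = x d + ind SA d by rewrite /T shE /ind (negbTE HdC) subn0.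
case: (set_0Vmem SA) => [SA0 | [a0 Ha0]].
  have SC0 : SC = set0 by apply/eqP; rewrite -cards_eq0 -leqn0; rewrite SA0 cards0 in Hcard.
  have -> : T = x by apply/ffunP => g; rewrite /T shE /ind SA0 SC0 !in_set0 addn0 subn0.
  apply: Hnx => //; move: HTd; rewrite TdE /ind SA0 in_set0; lia_nb.
rewrite leqNgt; apply/negP => Hgt.
set Z := sh x (fun g => ind SA g + (g == d)) (fun=> 0).
have BZ : Bx Z.
  move=> g; rewrite /Z shE; case: (g =P d) => [->|_].
  - move: HTd; rewrite TdE; lia_nb.
  - by have := BZ0 g; rewrite /addS shE; lia_nb.
have CZ : C Z = x.
  apply: nonint_add => //; first by move=> g; rewrite /Z shE; lia_nb.
  move=> g Hg; apply: Hnx; last by apply: leq_trans Hg _; apply: BZ.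
  move: Hg; rewrite /Z shE /ind; case: (g =P d) => [->//|_].
  by case: (boolP (g \in SA)) => [/(subsetP HSP)//|_]; lia_nb.
have lTZ : lev (inc T d) Z.
  move=> g; rewrite incE /T /Z !shE; lia_nb.
have BTd := Bx_le BZ lTZ.
have Heq : C (inc T d) = inc T d.
  apply/ffunP => g; apply/eqP; rewrite eqn_leq (HC BTd g) /=.
  case: (g =P d) => [->|/eqP Hgd]; first by rewrite incE eqxx; lia_nb.
  pose a := if g \in SA then g else a0.
  have Ha : a \in SA by rewrite /a; case: ifP.
  have HgA : (g \in SA) ==> (g == a) by rewrite /a; case: ifP => H; rewrite ?eqxx ?implybT ?H.
  have [c Hc [Cy Hes]] := Hess a Ha.
  set y := sh x (eqv a) (eqv c) in Cy Hes *.
  have HcA := Hdis c; rewrite Hc /= in HcA.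
  have Hxc := Hpos c Hc.
  have Hac : a != c by apply/eqP => Eac; move: HcA; rewrite -Eac Ha.
  have Hdc : d != c by apply/eqP => Edc; move: HdC; rewrite Edc Hc.
  have Hfacts0 : forall g, [&& (g == a) ==> (g \in SA), (g == c) ==> (g \in SC),
     (g == c) ==> (g \notin SA), (g \in SC) ==> (g \notin SA) & (g == c) ==> (0 < x g)].
    move=> g'; rewrite (Hdis g') /=.
    case: (g' =P a) => [Ea|_]; case: (g' =P c) => [Ec|_] //=.
    - by move: Hac; rewrite -Ea -Ec eqxx.
    - by rewrite Ea Ha.
    - by rewrite Ec Hc HcA Hxc.
  have Hfacts : forall g, ((g == d) ==> (g != c)) && [&& (g == a) ==> (g \in SA), (g == c) ==> (g \in SC),
     (g == c) ==> (g \notin SA), (g \in SC) ==> (g \notin SA) & (g == c) ==> (0 < x g)].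
    move=> g'; rewrite Hfacts0 andbT; apply/implyP => /eqP ->; exact: Hdc.
  set Y := sh x (fun g => ind SA g + (g == d)) (eqv c).
  have lYZ : lev Y Z by move=> g'; rewrite /Y /Z !shE; lia_nb.
  have BY := Bx_le BZ lYZ.
  have lyY : lev y Y.
    move=> g'; rewrite /y /Y !shE /eqv /ind; have := Hfacts g'; lia_nb.
  have CY : C Y = y.
    apply: nonint_add => // g' Hg'.
    have Hg'u : y g' < u g' by apply: leq_trans Hg' _; apply: BY.
    case: (g' =P a) => [Ea|/eqP Hga].
    - subst g'.
      have Ead : a = d.
        apply/eqP; move: Hg'; rewrite /y /Y !shE /eqv /ind Ha eqxx; have := Hfacts a.
        case: (a =P d) => //; lia_nb.
      apply: W1 => //.
      + move=> g'; apply: leq_trans (BY g'); rewrite incE /y /Y !shE /eqv /ind; have := Hfacts g'.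
        rewrite -Ead; lia_nb.
      + apply: Hnx; first by apply: (subsetP HSP).
        have := BY a; rewrite /Y shE /eqv /ind Ha -Ead eqxx; have := Hfacts a; lia_nb.
    - apply: Hes => //.
      move: Hg'; rewrite /y /Y !shE /eqv /ind; case: (g' =P d) => [->//|_].
      by case: (boolP (g' \in SA)) => [/(subsetP HSP)//|_]; lia_nb.
  have lTY : lev (inc T d) Y.
    move=> g'; rewrite incE /T /Y !shE /eqv /ind; have := Hfacts g'; lia_nb.
  have := a2 g BY lTY; rewrite CY /y incE /T !shE /eqv /ind (negbTE Hgd).
  have := Hfacts g; move: HgA; lia_nb.
have := HA3 BZ BTd lTZ; rewrite Heq CZ vsize_inc.
have Hs := vsize_sh (x := x) (p := ind SA) (m := ind SC).
rewrite !sum_ind in Hs; have {}Hs := Hs _.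
have : vsize T + #|SC| = vsize x + #|SA|.
  apply: Hs => g; have := Hpos g; have := Hdis g; rewrite /ind.
  by case: (g \in SC) => //= H1 H2; have := H2 erefl; lia_nb.
lia_nb.
Qed.

Lemma legal_c (x : vec) a c : Bx x -> C x = x -> a != c -> Bx (inc x a) ->
  (forall e, C (inc x a) e + (e == c) = x e + (e == a)) -> Bx (inc x c) ->
  C (inc x c) c <= x c.
Proof.
move=> Bx0 Cx Hac Ba Hleg Bc.
have Hca : (c == a) = false by rewrite eq_sym; apply/negbTE.
set Z := sh x (fun g => (g == a) + (g == c)) (fun=> 0).
have BZ : Bx Z.
  move=> g; rewrite /Z shE; case: (g =P a) => [->|_].
  - by have := Ba a; rewrite incE eqxx eq_sym Hca; lia.
  - case: (g =P c) => [->|_]; first by have := Bc c; rewrite incE eqxx; lia.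
    by have := Bx0 g; lia.
have Hxc : 0 < x c by have := Hleg c; rewrite eqxx Hca; lia.
have laZ : lev (inc x a) Z by move=> g; rewrite incE /Z shE; lia.
have lcZ : lev (inc x c) Z by move=> g; rewrite incE /Z shE; lia.
have HZc : C Z c < x c.
  have := a2 c BZ laZ; have := Hleg c; rewrite incE eqxx Hca; lia.
have lCa : lev (C Z) (inc x a).
  move=> g; rewrite incE; case: (g =P c) => [->|/eqP Hgc]; first by lia.
  by have := HC BZ g; rewrite /Z shE (negbTE Hgc); lia.
have E1 := HA1 BZ Ba laZ lCa.
rewrite leqNgt; apply/negP => Hgt.
have Heq : C (inc x c) = inc x c.
  apply/ffunP => g; apply/eqP; rewrite eqn_leq (HC Bc g) /=.
  case: (g =P c) => [->|/eqP Hgc]; first by rewrite incE eqxx; lia.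
  have := a2 g BZ lcZ; rewrite -E1; have := Hleg g; rewrite incE (negbTE Hgc); lia.
have := HA3 BZ Bc lcZ; rewrite Heq -E1 vsize_inc.
have : vsize (C (inc x a)) + 1 = vsize x + 1.
  rewrite /vsize -[in LHS](sum_eq1 c) -[in RHS](sum_eq1 a) -!big_split /=.
  by apply: eq_bigr => g _; rewrite Hleg.
lia.
Qed.


Lemma acc_of (Z X : vec) : Bx Z -> lev X Z -> C Z = X -> C X = X.
Proof.
move=> BZ lXZ CZ; have BX := Bx_le BZ lXZ.
by rewrite (HA1 BZ BX lXZ) ?CZ // CZ => g.
Qed.

Lemma int_abs (z : vec) e : Bx z ->
  (exists z' : vec, Bx z' /\ z e < z' e /\ (forall e', e' != e -> z' e' = z e') /\ z e < C z' e)
  <-> (z e < u e /\ z e < C (inc z e) e).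
Proof.
move=> Bz; split.
- move=> [z' [Bz' [Hlt [Heq Hc]]]].
  have Hl : lev (inc z e) z'.
    move=> g; rewrite incE; case: (g =P e) => [->|/eqP Hg]; first by rewrite addn1.
    by rewrite Heq // addn0.
  split; first by apply: leq_trans Hlt (Bz' e).
  have := a2 e Bz' Hl; rewrite incE eqxx; lia.
- move=> [Hu Hc]; exists (inc z e); split.
    move=> g; rewrite incE; case: (g =P e) => [->|_]; [lia | by rewrite addn0].
  split; first by rewrite incE eqxx addn1.
  split => // e' /negbTE; by rewrite incE => ->; rewrite addn0.
Qed.

End Abs.

Lemma zip_path_aux (T : eqType) (r : rel T) (s : seq T) y y0 :
  (forall pq, pq \in zip (y :: s) (rcons s y0) -> r pq.1 pq.2) -> path r y (rcons s y0).
Proof.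
elim: s y => [|z s IH] y H /=.
  by rewrite andbT; apply: (H (y, y0)); rewrite inE.
apply/andP; split; first by apply: (H (y, z)); rewrite /= inE eqxx.
by apply: IH => pq Hpq; apply: H; rewrite /= inE Hpq orbT.
Qed.

Lemma zip_cycle (T : eqType) (r : rel T) (s : seq T) :
  (forall pq, pq \in zip s (rot 1 s) -> r pq.1 pq.2) -> cycle r s.
Proof. by case: s => [//|y s]; rewrite rot1_cons /=; apply: zip_path_aux. Qed.

Section Glob.
Variables (W F E : finType) (G : gmarket W F E).
Local Notation vec := {ffun E -> nat}.
Local Notation CH := (Defs.choice G).
Hypothesis Hax : choice_axioms G.

Definition ub (v : (W + F)%type) (e : E) : nat := if incident G v e then cap G e else 0.

Lemma axv v : axC (ub v) (CH v).
Proof.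
have [H1 [H2 [H3 H4]]] := Hax v.
split.
- move=> z Bz; exact: (H1 z Bz).2.
- exact: H2.
- exact: H3.
- exact: H4.
Qed.

Lemma int_iff v e (z : vec) : inB G v z ->
  interesting G v e z <-> (z e < ub v e /\ z e < CH v (inc z e) e).
Proof.
move=> Bz; split.
- by case=> _ H; apply/(int_abs (axv v) e Bz).
- move=> H; split; last by apply/(int_abs (axv v) e Bz).
  by case: H; rewrite /ub; case: (incident G v e).
Qed.

Lemma vadd_unit (z : vec) a : vadd z (unitv a) = inc z a.
Proof. by apply/ffunP => g; rewrite !ffunE. Qed.

Lemma Bx_inc (u : E -> nat) (z : vec) e : Bx u z -> z e < u e -> Bx u (inc z e).
Proof. move=> Bz Hl g; rewrite incE; case: (g =P e) => [->|_]; [lia | by rewrite addn0]. Qed.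

Lemma restrictE v (x : vec) e : restrict G v x e = if incident G v e then x e else 0.
Proof. by rewrite ffunE. Qed.

Lemma incident_f f e : incident G (inr f) e = (fend G e == f).
Proof. by []. Qed.
Lemma incident_w w e : incident G (inl w) e = (wend G e == w).
Proof. by []. Qed.

Section X.
Variable x : vec.
Hypothesis Hst : stable G x.

Lemma accx v : acceptable G v (restrict G v x).
Proof. by case: Hst => [[_ H] _]; apply: H. Qed.

Lemma LC f a c : legal_f G x f a c -> ~ Uplus G x c.
Proof.
move=> [Ia [Ua [Ic [Hca Hleg]]]] Uc.
move: Ia Ic; rewrite !incident_f => /eqP Ia /eqP Ic.
move: Ua Uc; rewrite /Uplus Ia Ic.
have [Bx0 Cx] := accx (inr f).
rewrite (int_iff a Bx0) (int_iff c Bx0) => [[Ua _] [Uc1 Uc2]].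
have := legal_c (axv (inr f)) Bx0 Cx (a := a) (c := c).
rewrite eq_sym Hca => /(_ isT (Bx_inc Bx0 Ua)).
have Hleg' : forall e, CH (inr f) (inc (restrict G (inr f) x) a) e + (e == c)
    = restrict G (inr f) x e + (e == a) by move=> e; rewrite -vadd_unit; apply: Hleg.
by move=> /(_ Hleg' (Bx_inc Bx0 Uc1)); lia.
Qed.

Local Notation DA := (Defs.arc G x).

Lemma arc_tt e e' : DA (true, e) (true, e') -> essential G x (wend G e) e e'.
Proof. by case=> _ [_ H]. Qed.
Lemma arc_tf e e' : DA (true, e) (false, e') -> e = e' /\ Uplus G x e.
Proof. by case=> _ [_ H]. Qed.
Lemma arc_ft e e' : DA (false, e) (true, e') -> e = e' /\ Uminus G x e.
Proof. by case=> _ [_ H]. Qed.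
Lemma arc_ff e e' : DA (false, e) (false, e') -> legal_f G x (fend G e) e e'.
Proof. by case=> _ [_ H]. Qed.
Lemma arc_inD p q : DA p q -> inD G x p /\ inD G x q.
Proof. by case=> H1 [H2 _]. Qed.

Lemma ess_minus w c a : essential G x w c a -> Uminus G x c.
Proof. by case=> [[_ [H _]] _]. Qed.
Lemma ess_plus w c a : essential G x w c a -> Uplus G x a.
Proof. by case=> [[_ [_ [_ [H _]]]] _]. Qed.
Lemma legal_plus f a c : legal_f G x f a c -> Uplus G x a.
Proof. by case=> _ [H _]. Qed.
Lemma minus_not_plus e : Uminus G x e -> ~ Uplus G x e.
Proof. by case. Qed.

Variable cyc : seq (bool * E).
Hypothesis Hrot : rotation G x cyc.

Lemma cyc_uniq : uniq cyc.
Proof. by case: Hrot => _ [H _]. Qed.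

Lemma cyc_cycle : cycle (fun p q => `[< DA p q >]) cyc.
Proof.
apply: zip_cycle => pq Hpq; apply/asboolP.
by case: Hrot => _ [_ [H _]]; apply: H.
Qed.

Lemma arc_next p : p \in cyc -> DA p (next cyc p).
Proof. by move=> Hp; apply/asboolP; apply: (next_cycle cyc_cycle Hp). Qed.
Lemma arc_prev p : p \in cyc -> DA (prev cyc p) p.
Proof. by move=> Hp; apply/asboolP; apply: (prev_cycle cyc_cycle Hp). Qed.

Lemma inD_mem p : p \in cyc -> Uplus G x p.2 \/ Uminus G x p.2.
Proof. by move=> /arc_next /arc_inD [H _]. Qed.

Lemma mem_f_of_t e : (true, e) \in cyc -> (false, e) \in cyc.
Proof.
move=> H; case: (inD_mem H) => /= U.
- have := arc_next H; rewrite -(mem_next cyc) in H; move: H.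
  case: (next cyc (true, e)) => [[] e'] Hm A.
  + by exfalso; apply: (minus_not_plus (ess_minus (arc_tt A))) U.
  + by case: (arc_tf A) => ->.
- have := arc_prev H; rewrite -(mem_prev cyc) in H; move: H.
  case: (prev cyc (true, e)) => [[] e'] Hm A.
  + by exfalso; apply: (minus_not_plus U) (ess_plus (arc_tt A)).
  + by case: (arc_ft A) => <-.
Qed.

Lemma mem_t_of_f e : (false, e) \in cyc -> (true, e) \in cyc.
Proof.
move=> H; case: (inD_mem H) => /= U.
- have := arc_prev H; rewrite -(mem_prev cyc) in H; move: H.
  case: (prev cyc (false, e)) => [[] e'] Hm A.
  + by case: (arc_tf A) => <-.
  + by exfalso; apply: (LC (arc_ff A)) U.
- have := arc_next H; rewrite -(mem_next cyc) in H; move: H.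
  case: (next cyc (false, e)) => [[] e'] Hm A.
  + by case: (arc_ft A) => ->.
  + by exfalso; apply: (minus_not_plus U) (legal_plus (arc_ff A)).
Qed.

Lemma mem_both e : on_cycle cyc e -> (true, e) \in cyc /\ (false, e) \in cyc.
Proof.
case=> H; [split => //; exact: mem_f_of_t | split => //; exact: mem_t_of_f].
Qed.

Definition SA := [set e | `[< on_cycle cyc e /\ Uplus G x e >]].
Definition SC := [set e | `[< on_cycle cyc e /\ Uminus G x e >]].

Lemma inSA e : e \in SA <-> on_cycle cyc e /\ Uplus G x e.
Proof. by rewrite inE; split => /asboolP. Qed.
Lemma inSC e : e \in SC <-> on_cycle cyc e /\ Uminus G x e.
Proof. by rewrite inE; split => /asboolP. Qed.

Lemma Cf c : c \in SC -> exists2 a, a \in SA & legal_f G x (fend G a) a c.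
Proof.
move=> /inSC [Hon Um]; have [_ H] := mem_both Hon.
have := arc_prev H; rewrite -(mem_prev cyc) in H; move: H.
case: (prev cyc (false, c)) => [[] a] Hm A.
- by case: (arc_tf A) => Eq U; exfalso; apply: (minus_not_plus Um); rewrite -Eq.
- exists a; last exact: arc_ff A.
  by apply/inSA; split; [right | exact: legal_plus (arc_ff A)].
Qed.

Lemma Cw a : a \in SA -> exists2 c, c \in SC & essential G x (wend G c) c a.
Proof.
move=> /inSA [Hon Up]; have [H _] := mem_both Hon.
have := arc_prev H; rewrite -(mem_prev cyc) in H; move: H.
case: (prev cyc (true, a)) => [[] c] Hm A.
- exists c; last exact: arc_tt A.
  by apply/inSC; split; [left | exact: ess_minus (arc_tt A)].
- by case: (arc_ft A) => Eq U; exfalso; apply: (minus_not_plus U); rewrite Eq.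
Qed.

Definition phi a := (next cyc (false, a)).2.
Definition psi c := (next cyc (true, c)).2.

Lemma phi_spec a : a \in SA ->
  [/\ next cyc (false, a) = (false, phi a), phi a \in SC & legal_f G x (fend G a) a (phi a)].
Proof.
move=> /inSA [Hon Up]; have [_ H] := mem_both Hon.
have := arc_next H; rewrite /phi -(mem_next cyc) in H *; move: H.
case: (next cyc (false, a)) => [[] c] Hm A /=.
- by case: (arc_ft A) => _ /minus_not_plus.
- split => //; last exact: arc_ff A.
  apply/inSC; split; first by right.
  by have [_ HD] := arc_inD A; case: HD => //= /(LC (arc_ff A)).
Qed.

Lemma psi_spec c : c \in SC ->
  [/\ next cyc (true, c) = (true, psi c), psi c \in SA & essential G x (wend G c) c (psi c)].
Proof.
move=> /inSC [Hon Um]; have [H _] := mem_both Hon.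
have := arc_next H; rewrite /psi -(mem_next cyc) in H *; move: H.
case: (next cyc (true, c)) => [[] a] Hm A /=.
- split => //; last exact: arc_tt A.
  by apply/inSA; split; [left | exact: ess_plus (arc_tt A)].
- by case: (arc_tf A) => _ U; exfalso; apply: (minus_not_plus Um).
Qed.

Lemma next_inj' : injective (next cyc).
Proof. exact: can_inj (prev_next cyc_uniq). Qed.

Lemma phi_inj : {in SA &, injective phi}.
Proof.
move=> a1 a2 H1 H2 E12.
have [N1 _ _] := phi_spec H1; have [N2 _ _] := phi_spec H2.
have : next cyc (false, a1) = next cyc (false, a2) by rewrite N1 N2 E12.
by move/next_inj' => [].
Qed.

Lemma psi_inj : {in SC &, injective psi}.
Proof.
move=> a1 a2 H1 H2 E12.
have [N1 _ _] := psi_spec H1; have [N2 _ _] := psi_spec H2.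
have : next cyc (true, a1) = next cyc (true, a2) by rewrite N1 N2 E12.
by move/next_inj' => [].
Qed.

Definition SAv v := SA :&: [set e | incident G v e].
Definition SCv v := SC :&: [set e | incident G v e].
Definition xv v := restrict G v x.
Lemma memSAv v e : (e \in SAv v) = (e \in SA) && incident G v e.
Proof. by rewrite /SAv in_setI [X in _ && X]inE. Qed.
Lemma memSCv v e : (e \in SCv v) = (e \in SC) && incident G v e.
Proof. by rewrite /SCv in_setI [X in _ && X]inE. Qed.

Definition x' : vec := [ffun e => x e + (e \in SA) - (e \in SC)].

Lemma disj e : (e \in SC) ==> (e \notin SA).
Proof.
apply/implyP => /inSC [_ Um]; apply/negP => /inSA [_ Up].
exact: minus_not_plus Um Up.
Qed.

Lemma disjv v e : (e \in SCv v) ==> (e \notin SAv v).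
Proof.
apply/implyP => /setIP [H _]; apply/negP => /setIP [H2 _].
by have := disj e; rewrite H H2.
Qed.

Lemma SC_pos e : e \in SC -> 0 < x e.
Proof. by move=> /inSC [_ [H _]]. Qed.

Lemma SA_cap e : e \in SA -> x e < cap G e.
Proof.
move=> /inSA [_ Up]; move: Up; rewrite /Uplus.
have [B _] := accx (inr (fend G e)).
by rewrite (int_iff e B) /ub !restrictE incident_f eqxx => -[].
Qed.

Lemma x_cap e : x e <= cap G e.
Proof. by case: Hst => [[H _] _]. Qed.

Lemma restr_x' v : restrict G v x' = sh (xv v) (ind (SAv v)) (ind (SCv v)).
Proof.
apply/ffunP => g; rewrite restrictE shE /xv restrictE /ind memSAv memSCv /x' ffunE.
by case: (incident G v g); rewrite ?andbT ?andbF.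
Qed.

Lemma BxS v : Bx (ub v) (addS (xv v) (SAv v)).
Proof.
move=> g; rewrite shE /xv restrictE /ind memSAv /ub.
case: (incident G v g); rewrite ?andbT ?andbF /=.
- case: (boolP (g \in SA)) => H /=; last by rewrite addn0 subn0 x_cap.
  by have := SA_cap H; lia.
- by [].
Qed.

Lemma posv v c : c \in SCv v -> 0 < xv v c.
Proof. by rewrite memSCv /xv restrictE => /andP [H ->]; apply: SC_pos. Qed.

Lemma card_le (A B : {set E}) (g : E -> E) :
  {in A &, injective g} -> (forall a, a \in A -> g a \in B) -> #|A| <= #|B|.
Proof.
move=> Hi HB; rewrite -(card_in_imset Hi); apply: subset_leq_card.
by apply/subsetP => _ /imsetP [a Ha ->]; apply: HB.
Qed.

Lemma f_main f : CH (inr f) (addS (xv (inr f)) (SAv (inr f)))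
  = sh (xv (inr f)) (ind (SAv (inr f))) (ind (SCv (inr f))).
Proof.
apply: (F_main (axv (inr f))).
- exact: BxS.
- exact: (accx (inr f)).2.
- exact: disjv.
- exact: posv.
- apply: (card_le (g := phi)).
    by move=> a1 a2; rewrite !memSAv => /andP [H1 _] /andP [H2 _]; apply: phi_inj.
  move=> a; rewrite memSAv memSCv => /andP [Ha If].
  have [_ Hc [_ [_ [Ic _]]]] := phi_spec Ha.
  by rewrite Hc /= (eqP Ic); rewrite incident_f in If.
- move=> c; rewrite memSCv => /andP [Hc Ic].
  have [a Ha [Ia [Ua [Ic' [Hca Hleg]]]]] := Cf Hc.
  move: Ic Ic'; rewrite !incident_f => /eqP Ic /eqP Ic'.
  rewrite -Ic' Ic in Hleg.
  exists a; first by rewrite memSAv Ha incident_f -Ic' Ic eqxx.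
  have := Hleg c; rewrite vadd_unit eqxx (negbTE Hca) /xv; lia.
Qed.

Definition Pw w := [set d | incident G (inl w) d && `[< Uplus G x d >]].

Lemma wshiftE w a c : wshift G x w a c = sh (xv (inl w)) (eqv a) (eqv c).
Proof. by apply/ffunP => g; rewrite /wshift /sh !ffunE. Qed.

Lemma w_ess w a : a \in SAv (inl w) ->
  ess_hyp (ub (inl w)) (CH (inl w)) (xv (inl w)) (Pw w) (SCv (inl w)) a.
Proof.
rewrite memSAv => /andP [Ha Iw].
have [c Hc [[Ic [Um [Ia [Ua Acc]]]] Hes]] := Cw Ha.
move: Iw Ia; rewrite !incident_w => /eqP Iw /eqP Ia.
have Ew : wend G c = w by rewrite -Iw Ia.
rewrite Ew in Acc Hes.
exists c; first by rewrite memSCv Hc incident_w Ew eqxx.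
rewrite wshiftE in Acc Hes; split; first exact: Acc.2.
move=> d; rewrite !inE => /andP [Id /asboolP Ud] Hda Hdu.
have := Hes d Id Ud Hda; rewrite (int_iff d Acc.1) => H.
by rewrite leqNgt; apply/negP => H2; apply: H.
Qed.

Lemma card_w w : #|SCv (inl w)| <= #|SAv (inl w)|.
Proof.
apply: (card_le (g := psi)).
  by move=> a1 a2; rewrite !memSCv => /andP [H1 _] /andP [H2 _]; apply: psi_inj.
move=> c; rewrite memSCv memSAv => /andP [Hc Iw].
have [_ Ha [[_ [_ [Ia _]]] _]] := psi_spec Hc.
by rewrite Ha /= (eqP Ia); rewrite incident_w in Iw.
Qed.

Lemma SA_P w : SAv (inl w) \subset Pw w.
Proof.
apply/subsetP => a; rewrite memSAv => /andP [Ha Ia].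
rewrite /Pw inE Ia /=; have [_ U] := (inSA a).1 Ha; exact/asboolP.
Qed.

Lemma w_acc w : CH (inl w) (sh (xv (inl w)) (ind (SAv (inl w))) (ind (SCv (inl w))))
  = sh (xv (inl w)) (ind (SAv (inl w))) (ind (SCv (inl w))).
Proof.
apply: (W_acc (axv (inl w)) (P := Pw w)).
- exact: BxS.
- exact: (accx (inl w)).2.
- exact: disjv.
- exact: posv.
- exact: card_w.
- exact: SA_P.
- exact: w_ess.
Qed.

Lemma w_nonint w d : d \in Pw w ->
  sh (xv (inl w)) (ind (SAv (inl w))) (ind (SCv (inl w))) d < ub (inl w) d ->
  CH (inl w) (inc (sh (xv (inl w)) (ind (SAv (inl w))) (ind (SCv (inl w)))) d) d
  <= sh (xv (inl w)) (ind (SAv (inl w))) (ind (SCv (inl w))) d.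
Proof.
apply: (W_nonint (axv (inl w))).
- exact: BxS.
- exact: (accx (inl w)).2.
- exact: disjv.
- exact: posv.
- exact: card_w.
- exact: SA_P.
- move=> c; rewrite memSCv => /andP [Hc _]; rewrite /Pw inE; apply/negP => /andP [_ /asboolP Up].
  have [_ Um] := (inSC c).1 Hc; exact: minus_not_plus Um Up.
- move=> d0; rewrite !inE => /andP [/eqP Iw /asboolP Ud] Hu.
  rewrite leqNgt; apply/negP => Hgt.
  case: Hst => _ /(_ d0); apply; split; last exact: Ud.
  have [B _] := accx (inl w).
  by rewrite Iw (int_iff d0 B).
- exact: w_ess.
Qed.

Lemma main_res : exists x'0 : vec,
    (forall e, Posz (x'0 e) = (Posz (x e) + chi G x cyc e)%R) /\
    stable G x'0 /\ precF G x x'0.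
Proof.
exists x'; split; [|split; [split|]].
- move=> e; rewrite /chi /x' ffunE.
  case: (boolP (e \in SA)) => HA.
  + have [Hon Up] := (inSA e).1 HA.
    rewrite asboolT //.
    have := disj e; rewrite HA implybF => /negbTE ->; lia.
  + rewrite asboolF; last by move=> H; move: HA; rewrite (inSA e).2.
    case: (boolP (e \in SC)) => HC.
    * have [Hon Um] := (inSC e).1 HC.
      rewrite asboolT //; have := SC_pos HC; lia.
    * rewrite asboolF; last by move=> H; move: HC; rewrite (inSC e).2.
      lia.
- split.
  + move=> e; rewrite /x' ffunE; have := x_cap e.
    case: (boolP (e \in SA)) => HA; last lia.
    have := SA_cap HA; lia.
  + move=> [w|f]; rewrite restr_x'.
    * split; last exact: w_acc.
      apply: (Bx_le (BxS (inl w))) => g; rewrite !shE; lia.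
    * split; last first.
        apply: (acc_of (axv (inr f)) (BxS (inr f))); last exact: f_main.
        by move=> g; rewrite !shE; lia.
      apply: (Bx_le (BxS (inr f))) => g; rewrite !shE; lia.
- move=> e [Hw Hf].
  move: Hf; rewrite /Uplus restr_x'.
  have BX : Bx (ub (inr (fend G e))) (sh (xv (inr (fend G e))) (ind (SAv (inr (fend G e)))) (ind (SCv (inr (fend G e))))).
    apply: (Bx_le (BxS _)) => g; rewrite !shE; lia.
  rewrite (int_iff e BX) => [[Hu Hi]].
  have Up : Uplus G x e.
    case: (boolP (e \in SAv (inr (fend G e)))) => HeA.
      by move: HeA; rewrite memSAv => /andP [/inSA [_ U] _].
    have [_ Hu' Hi'] := F_int (axv (inr (fend G e))) (BxS _) (accx _).2 (@posv _) (f_main _) HeA Hu Hi.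
    rewrite /Uplus; have [B _] := accx (inr (fend G e)).
    by rewrite (int_iff e B).
  move: Hw; rewrite restr_x'.
  have BT : Bx (ub (inl (wend G e))) (sh (xv (inl (wend G e))) (ind (SAv (inl (wend G e)))) (ind (SCv (inl (wend G e))))).
    apply: (Bx_le (BxS _)) => g; rewrite !shE; lia.
  rewrite (int_iff e BT) => [[Hu2 Hi2]].
  have HP : e \in Pw (wend G e) by rewrite /Pw inE incident_w eqxx /=; apply/asboolP.
  have := w_nonint HP Hu2; lia.
- split.
  + have [p Hp] : exists p, p \in cyc.
      by case: Hrot; case: (cyc) => [//|p s] _ _; exists p; rewrite inE eqxx.
    move=> Exx; case: p Hp => b e Hp.
    have Hon : on_cycle cyc e by case: b Hp => Hp; [left|right].
    have := f_equal (fun z : vec => z e) Exx; rewrite /x' ffunE.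
    case: (inD_mem Hp) => /= U.
    * have HA : e \in SA by apply/inSA.
      rewrite HA; have := disj e; rewrite HA implybF => /negbTE ->; lia.
    * have HC : e \in SC by apply/inSC.
      rewrite HC; have := disj e; rewrite HC /= => /negbTE ->; have := SC_pos HC; lia.
  + move=> f; rewrite restr_x'.
    case: (eqVneq (restrict G (inr f) x) (sh (xv (inr f)) (ind (SAv (inr f))) (ind (SCv (inr f))))) => Heq.
      by left.
    right.
    have Hv : vmax (sh (xv (inr f)) (ind (SAv (inr f))) (ind (SCv (inr f)))) (restrict G (inr f) x)
         = addS (xv (inr f)) (SAv (inr f)).
      apply/ffunP => g; rewrite /vmax ffunE !shE -/(xv (inr f)).
      have := disjv (inr f) g; have := @posv (inr f) g; rewrite /ind.
      case: (g \in SCv (inr f)) => /=; last by lia.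
      move=> H1 /negbTE ->; have := H1 erefl; lia.
    have Cf0 := f_main f.
    have lX : lev (sh (xv (inr f)) (ind (SAv (inr f))) (ind (SCv (inr f)))) (addS (xv (inr f)) (SAv (inr f))).
      by move=> g; rewrite !shE; lia.
    split; [split|split; [exact: accx|split]].
    * exact: Bx_le (BxS _) lX.
    * exact: (acc_of (axv (inr f)) (BxS (inr f))) lX Cf0.
    * by move=> E0; move: Heq; rewrite E0 eqxx.
    * by rewrite Hv.
Qed.

End X.
End Glob.

Theorem proposition3p4 (W F E : finType) (G : gmarket W F E) (x : {ffun E -> nat}) :
  simple_graph G -> choice_axioms G -> stable G x ->
  (exists xm, is_max_stable G xm /\ x <> xm) ->
  forall cyc : seq (bool * E), rotation G x cyc ->
  exists x' : {ffun E -> nat},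
    (forall e, Posz (x' e) = (Posz (x e) + chi G x cyc e)%R) /\
    stable G x' /\ precF G x x'.
Proof.
move=> _ Hax Hst _ cyc Hrot.
exact: (main_res Hax Hst Hrot).
Qed.
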